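(* Consider the following birational transformations acting on $(q_1,p_1,q_2,p_2,t,s)$ and on parameters $(\alpha_1,\dots,\alpha_6)$ (constrained by $2\alpha_1+\alpha_2+\dots+\alpha_6=1$); each tuple lists images of $(q_1,p_1,q_2,p_2,t,s;\alpha_1,\dots,\alpha_6)$: $w_1$: $(q_1,p_1,q_2,p_2,t,s;\alpha_1+\alpha_2,-\alpha_2,\alpha_3,\alpha_4,\alpha_5,\alpha_6)$; $w_2$: $(q_1,p_1-\frac{\alpha_3}{q_1},q_2,p_2,t,s;\alpha_1+\alpha_3,\alpha_2,-\alpha_3,\alpha_4,\alpha_5,\alpha_6)$; $w_3$: $(q_1,p_1,q_2,p_2-\frac{\alpha_4}{q_2},t,s;\alpha_1+\alpha_4,\alpha_2,\alpha_3,-\alpha_4,\alpha_5,\alpha_6)$; $w_4$: $(q_1,p_1-\frac{\alpha_5}{q_1+q_2-1},q_2,p_2-\frac{\alpha_5}{q_1+q_2-1},t,s;\alpha_1+\alpha_5,\alpha_2,\alpha_3,\alpha_4,-\alpha_5,\alpha_6)$; $w_5$: $(q_1,p_1-\frac{\alpha_6}{q_1+tq_2/s-t},q_2,p_2-\frac{\alpha_6t}{s(q_1+tq_2/s-t)},t,s;\alpha_1+\alpha_6,\alpha_2,\alpha_3,\alpha_4,\alpha_5,-\alpha_6)$; $\pi_1$: with $A=q_1p_1+q_2p_2+\alpha_1$, $A'=A+\alpha_2$: $\big(\frac{p_1(q_1p_1-\alpha_3)}{AA'},-\frac{AA'}{p_1},\frac{p_2(q_2p_2-\alpha_4)}{AA'},-\frac{AA'}{p_2},\frac1t,\frac1s;-\alpha_1-\alpha_2-\alpha_3-\alpha_4,\alpha_2,\alpha_3,\alpha_4,1-\alpha_6,1-\alpha_5\big)$;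 $\pi_2$: $\big(1-q_1-q_2,-p_1,q_2,p_2-p_1,1-t,\frac{(t-1)s}{t-s};\alpha_1,\alpha_2,\alpha_5,\alpha_4,\alpha_3,\alpha_6\big)$; $\pi_3$: $\big(\frac{-sq_1-tq_2+ts}{(t-1)s},-(t-1)p_1,\frac{(t-s)q_2}{(t-1)s},-\frac{(t-1)(tp_1-sp_2)}{t-s},\frac{t}{t-1},\frac{t-s}{t-1};\alpha_1,\alpha_2,\alpha_6,\alpha_4,\alpha_5,\alpha_3\big)$; $\pi_4$: $\big(\frac{q_1}{t},tp_1,\frac{q_2}{s},sp_2,\frac1t,\frac1s;\alpha_1,\alpha_2,\alpha_3,\alpha_4,\alpha_6,\alpha_5\big)$; $\pi_5$: $\big(-\frac{q_1}{q_2},-p_1q_2,\frac1{q_2},-(q_2p_2+q_1p_1+\alpha_1)q_2,\frac{t}{s},\frac1s;\alpha_1,\alpha_4,\alpha_3,\alpha_2,\alpha_5,\alpha_6\big)$; $\pi_6$: $(q_2,p_2,q_1,p_1,s,t;\alpha_1,\alpha_2,\alpha_4,\alpha_3,\alpha_5,\alpha_6)$. Further, with $\gamma_0=1-\alpha_5-\alpha_6$, $\gamma_1=\alpha_6-\alpha_5$, $\gamma_2=\alpha_5-\alpha_2$, $\gamma_3=\alpha_2-\alpha_3$, $\gamma_4=\alpha_3-\alpha_4$, $\gamma_5=\alpha_4$ (so that $\alpha$'s are recovered from $\gamma$'s), define transformations $s_0,\dots,s_5$ (tuples list images of $(q_1,p_1,q_2,p_2,t,s;\gamma_0,\dots,\gamma_5)$),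 writing $E=2q_1p_1+2q_2p_2+\gamma_0-\gamma_3-2\gamma_4-3\gamma_5$, $F=2q_1p_1+2q_2p_2+\gamma_0+\gamma_3-\gamma_5$, $G=q_1p_1+q_2p_2+\frac{\gamma_0-\gamma_3-2\gamma_4-3\gamma_5}{2}$: $s_0$: $\big(\frac{4p_1(q_1p_1-\gamma_4-\gamma_5)}{EF},-\frac{EF}{4p_1},\frac{4p_2(q_2p_2-\gamma_5)}{EF},-\frac{EF}{4p_2},\frac1t,\frac1s;-\gamma_0,\gamma_1,\gamma_2+\gamma_0,\gamma_3,\gamma_4,\gamma_5\big)$; $s_1$: $\big(\frac{q_1}{t},tp_1,\frac{q_2}{s},sp_2,\frac1t,\frac1s;\gamma_0,-\gamma_1,\gamma_2+\gamma_1,\gamma_3,\gamma_4,\gamma_5\big)$; $s_2$: $\big(\frac{q_1}{q_1+q_2-1},(p_1-G)(q_1+q_2-1),\frac{q_2}{q_1+q_2-1},(p_2-G)(q_1+q_2-1),\frac{t}{t-1},\frac{s}{s-1};\gamma_0+\gamma_2,\gamma_1+\gamma_2,-\gamma_2,\gamma_3+\gamma_2,\gamma_4,\gamma_5\big)$; $s_3$: $\big(\frac1{q_1},-Gq_1,-\frac{q_2}{q_1},-q_1p_2,\frac1t,\frac{s}{t};\gamma_0,\gamma_1,\gamma_2+\gamma_3,-\gamma_3,\gamma_4+\gamma_3,\gamma_5\big)$; $s_4$: $(q_2,p_2,q_1,p_1,s,t;\gamma_0,\gamma_1,\gamma_2,\gamma_3+\gamma_4,-\gamma_4,\gamma_5+\gamma_4)$;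 $s_5$: $\big(q_1,p_1,q_2,p_2-\frac{\gamma_5}{q_2},t,s;\gamma_0,\gamma_1,\gamma_2,\gamma_3,\gamma_4+2\gamma_5,-\gamma_5\big)$. Then the group generated by $s_0,\dots,s_5$ (an affine Weyl group of type $B_5^{(1)}$) equals the group generated by $w_1,\dots,w_5,\pi_1,\dots,\pi_6$.
   Context: All these transformations are regarded as birational automorphisms of the space of variables $(q_1,p_1,q_2,p_2,t,s)$ together with parameters; the transformations $s_i$ are written in the parameters $\gamma_i$, which are linear functions of the $\alpha_i$ as given, and act on the $\alpha_i$ through this correspondence. Group equality means each generator of one family is a composition of generators of the other family. *)

(* Defs.v *)
From HB Require Import structures.
From mathcomp Require Import all_boot all_order all_algebra.
From mathcomp Require Import mpoly.
Set Implicit Arguments. Unset Strict Implicit. Unset Printing Implicit Defensive.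
Import Order.TTheory GRing.Theory Num.Theory.
Local Open Scope ring_scope.

Record st (F : Type) := St {
  q1 : F; p1 : F; q2 : F; p2 : F; tv : F; sv : F;
  a1 : F; a2 : F; a3 : F; a4 : F; a5 : F; a6 : F }.
Arguments St {F}.

Section Maps.
Variable F : fieldType.
Implicit Types x : st F.

Inductive WPgen := W1 | W2 | W3 | W4 | W5 | P1 | P2 | P3 | P4 | P5 | P6.

Definition wp_act (g : WPgen) x : st F :=
  let: St q1 p1 q2 p2 t s a1 a2 a3 a4 a5 a6 := x in
  match g with
  | W1 => St q1 p1 q2 p2 t s (a1 + a2) (- a2) a3 a4 a5 a6
  | W2 => St q1 (p1 - a3 / q1) q2 p2 t s (a1 + a3) a2 (- a3) a4 a5 a6
  | W3 => St q1 p1 q2 (p2 - a4 / q2) t s (a1 + a4) a2 a3 (- a4) a5 a6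
  | W4 => St q1 (p1 - a5 / (q1 + q2 - 1)) q2 (p2 - a5 / (q1 + q2 - 1)) t s
             (a1 + a5) a2 a3 a4 (- a5) a6
  | W5 => let D := q1 + t * q2 / s - t in
          St q1 (p1 - a6 / D) q2 (p2 - a6 * t / (s * D)) t s
             (a1 + a6) a2 a3 a4 a5 (- a6)
  | P1 => let A := q1 * p1 + q2 * p2 + a1 in let A' := A + a2 in
          St (p1 * (q1 * p1 - a3) / (A * A')) (- (A * A') / p1)
             (p2 * (q2 * p2 - a4) / (A * A')) (- (A * A') / p2) (1 / t) (1 / s)
             (- a1 - a2 - a3 - a4) a2 a3 a4 (1 - a6) (1 - a5)
  | P2 => St (1 - q1 - q2) (- p1) q2 (p2 - p1) (1 - t) ((t - 1) * s / (t - s))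
             a1 a2 a5 a4 a3 a6
  | P3 => St ((- s * q1 - t * q2 + t * s) / ((t - 1) * s)) (- (t - 1) * p1)
             ((t - s) * q2 / ((t - 1) * s)) (- ((t - 1) * (t * p1 - s * p2)) / (t - s))
             (t / (t - 1)) ((t - s) / (t - 1))
             a1 a2 a6 a4 a5 a3
  | P4 => St (q1 / t) (t * p1) (q2 / s) (s * p2) (1 / t) (1 / s)
             a1 a2 a3 a4 a6 a5
  | P5 => St (- q1 / q2) (- p1 * q2) (1 / q2) (- (q2 * p2 + q1 * p1 + a1) * q2)
             (t / s) (1 / s) a1 a4 a3 a2 a5 a6
  | P6 => St q2 p2 q1 p1 s t a1 a2 a4 a3 a5 a6
  end.

Inductive Sgen := S0 | S1 | S2 | S3 | S4 | S5.

Definition of_gam (q1 p1 q2 p2 t s g0 g1 g2 g3 g4 g5 : F) : st F :=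
  let a4 := g5 in let a3 := g4 + g5 in let a2 := g3 + g4 + g5 in
  let a5 := g2 + a2 in let a6 := g1 + a5 in
  let a1 := (g0 - a2 - a3 - a4) / 2 in
  St q1 p1 q2 p2 t s a1 a2 a3 a4 a5 a6.

Definition s_act (g : Sgen) x : st F :=
  let: St q1 p1 q2 p2 t s a1 a2 a3 a4 a5 a6 := x in
  let g0 := 1 - a5 - a6 in let g1 := a6 - a5 in let g2 := a5 - a2 in
  let g3 := a2 - a3 in let g4 := a3 - a4 in let g5 := a4 in
  let E := 2 * q1 * p1 + 2 * q2 * p2 + g0 - g3 - 2 * g4 - 3 * g5 in
  let Ff := 2 * q1 * p1 + 2 * q2 * p2 + g0 + g3 - g5 in
  let G := q1 * p1 + q2 * p2 + (g0 - g3 - 2 * g4 - 3 * g5) / 2 in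
  match g with
  | S0 => of_gam (4 * p1 * (q1 * p1 - g4 - g5) / (E * Ff)) (- (E * Ff) / (4 * p1))
                 (4 * p2 * (q2 * p2 - g5) / (E * Ff)) (- (E * Ff) / (4 * p2))
                 (1 / t) (1 / s)
                 (- g0) g1 (g2 + g0) g3 g4 g5
  | S1 => of_gam (q1 / t) (t * p1) (q2 / s) (s * p2) (1 / t) (1 / s)
                 g0 (- g1) (g2 + g1) g3 g4 g5
  | S2 => of_gam (q1 / (q1 + q2 - 1)) ((p1 - G) * (q1 + q2 - 1))
                 (q2 / (q1 + q2 - 1)) ((p2 - G) * (q1 + q2 - 1))
                 (t / (t - 1)) (s / (s - 1))
                 (g0 + g2) (g1 + g2) (- g2) (g3 + g2) g4 g5
  | S3 => of_gam (1 / q1) (- G * q1) (- q2 / q1) (- q1 * p2) (1 / t) (s / t)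
                 g0 g1 (g2 + g3) (- g3) (g4 + g3) g5
  | S4 => of_gam q2 p2 q1 p1 s t
                 g0 g1 g2 (g3 + g4) (- g4) (g5 + g4)
  | S5 => of_gam q1 p1 q2 (p2 - g5 / q2) t s
                 g0 g1 g2 g3 (g4 + 2 * g5) (- g5)
  end.

End Maps.

(* The field of rational functions over Q in the 11 independent coordinates
   q1,p1,q2,p2,t,s,a2,...,a6 (a1 is eliminated by 2a1+a2+...+a6 = 1). *)
Definition Kfun := {fraction {mpoly rat[11]}}.

Definition Xg (i : nat) : Kfun := tofrac ('X_(inord i) : {mpoly rat[11]}).

Definition generic : st Kfun :=
  St (Xg 0) (Xg 1) (Xg 2) (Xg 3) (Xg 4) (Xg 5)
     ((1 - Xg 6 - Xg 7 - Xg 8 - Xg 9 - Xg 10) / 2)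
     (Xg 6) (Xg 7) (Xg 8) (Xg 9) (Xg 10).

(* A composition of generators, evaluated on a point: [g1; g2; ...; gk]
   denotes g1 o g2 o ... o gk.  Two compositions of rational maps agree as
   birational maps iff they agree at the generic point. *)
Definition wp_word (F : fieldType) (l : seq WPgen) (x : st F) : st F :=
  foldr (fun g y => wp_act g y) x l.
Definition s_word (F : fieldType) (l : seq Sgen) (x : st F) : st F :=
  foldr (fun g y => s_act g y) x l.

(* Main.v *)
Require Import Defs.
From mathcomp Require Import all_boot all_order all_algebra.
From mathcomp Require Import mpoly.
From mathcomp Require Import ring.
Set Implicit Arguments. Unset Strict Implicit. Unset Printing Implicit Defensive.
Import GRing.Theory.
Local Open Scope ring_scope.

Inductive pe := PX of nat | PC of int | PAdd of pe & pe | PMul of pe & pe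
  | POpp of pe.

Fixpoint evalP (R : comNzRingType) (x : nat -> R) (e : pe) : R :=
  match e with
  | PX i => x i
  | PC z => z%:~R
  | PAdd a b => evalP x a + evalP x b
  | PMul a b => evalP x a * evalP x b
  | POpp a => - evalP x a
  end.

Lemma evalP_tofrac r :
  evalP (fun i => Xg i) r = tofrac (evalP (fun i => ('X_(inord i) : {mpoly rat[11]})) r).
Proof.
elim: r => /= [i|z|a IHa b IHb|a IHa b IHb|a IHa].
- by [].
- by rewrite rmorph_int.
- by rewrite IHa IHb rmorphD.
- by rewrite IHa IHb rmorphM.
- by rewrite IHa rmorphN.
Qed.

Lemma evalP_meval (v : nat -> int) r :
  meval (fun j : 'I_11 => (v j)%:~R : rat) (evalP (fun i => ('X_(inord i) : {mpoly rat[11]})) r)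
  = (evalP (fun i => v (if (i < 11)%N then i else 0%N)) r)%:~R.
Proof.
elim: r => /= [i|z|a IHa b IHb|a IHa b IHb|a IHa].
- rewrite mevalXU; case: ltnP => h; first by rewrite inordK.
  by rewrite /inord /insubd insubN // -ltnNge.
- by rewrite rmorph_int intz.
- by rewrite mevalD IHa IHb intrD.
- by rewrite mevalM IHa IHb intrM.
- by rewrite mevalN IHa mulrNz.
Qed.

Lemma HK (v : nat -> int) r :
  evalP (fun i => v (if (i < 11)%N then i else 0%N)) r != 0 -> evalP (fun i => Xg i) r != 0.
Proof.
move=> H; rewrite evalP_tofrac tofrac_eq0; apply: contra H => /eqP h.
have := evalP_meval v r; rewrite h meval0 => /esym/eqP.
by rewrite intr_eq0.
Qed.

Definition gpt (F : fieldType) (x : nat -> F) : st F :=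
  St (x 0%N) (x 1%N) (x 2%N) (x 3%N) (x 4%N) (x 5%N)
     ((1 - x 6%N - x 7%N - x 8%N - x 9%N - x 10%N) / 2) (x 6%N) (x 7%N) (x 8%N) (x 9%N) (x 10%N).

Definition NZ (F : fieldType) (x : nat -> F) :=
  forall (v : nat -> int) r, evalP (fun i => v (if (i < 11)%N then i else 0%N)) r != 0 -> evalP x r != 0.

Lemma NZK : NZ (fun i => Xg i).
Proof. move=> v r; exact: HK. Qed.

Lemma nz_use (F : fieldType) (x : nat -> F) (H : NZ x) (v : nat -> int) r e :
  evalP (fun i => v (if (i < 11)%N then i else 0%N)) r != 0 -> evalP x r = e -> e != 0.
Proof. by move=> /H + <-. Qed.

Definition vpt1 (j : nat) : int := nth 0 [:: 3; 5; 7; 11; 13; 17; 19; 23; 29; 31; 37]%R j.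
Definition vpt2 (j : nat) : int := nth 0 [:: -4; 9; 2; -6; 21; -8; 15; -27; 33; 41; -10]%R j.

Lemma St_eq (F : Type) (x1 x2 x3 x4 x5 x6 x7 x8 x9 x10 x11 x12 y1 y2 y3 y4 y5 y6 y7 y8 y9 y10 y11 y12 : F) :
  x1 = y1 -> x2 = y2 -> x3 = y3 -> x4 = y4 -> x5 = y5 -> x6 = y6 ->
  x7 = y7 -> x8 = y8 -> x9 = y9 -> x10 = y10 -> x11 = y11 -> x12 = y12 ->
  St x1 x2 x3 x4 x5 x6 x7 x8 x9 x10 x11 x12 = St y1 y2 y3 y4 y5 y6 y7 y8 y9 y10 y11 y12.
Proof. by move=> -> -> -> -> -> -> -> -> -> -> -> ->. Qed.

Ltac reify x e :=
  lazymatch e with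
  | @GRing.add _ ?a ?b => let ra := reify x a in let rb := reify x b in constr:(PAdd ra rb)
  | @GRing.mul _ ?a ?b => let ra := reify x a in let rb := reify x b in constr:(PMul ra rb)
  | @GRing.opp _ ?a => let ra := reify x a in constr:(POpp ra)
  | @GRing.exp _ ?a O => constr:(PC 1)
  | @GRing.exp _ ?a (S ?n) => let ra := reify x a in let rb := reify x (@GRing.exp _ a n) in constr:(PMul ra rb)
  | @GRing.natmul _ (@GRing.one _) ?n => constr:(PC (Posz n))
  | @GRing.one _ => constr:(PC 1)
  | @GRing.zero _ => constr:(PC 0)
  | x ?n => constr:(PX n)
  end.

Ltac nz1 x H :=
  lazymatch goal with |- is_true (negb (@eq_op _ ?e _)) =>
    let r := reify x e in
    first [ apply: (nz_use H (v:=vpt1) (r:=r)); [vm_compute; reflexivity | first [reflexivity | simpl; ring]]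
          | apply: (nz_use H (v:=vpt2) (r:=r)); [vm_compute; reflexivity | first [reflexivity | simpl; ring]] ]
  end.

Ltac side x H := repeat (apply/andP; split); try done; nz1 x H.

Ltac unf := cbv [s_word s_act of_gam wp_word wp_act foldr gpt nth]; cbv beta iota zeta.

Ltac solveL x H := unf; apply: St_eq; field; side x H.

Lemma LW1h (F : fieldType) (x : nat -> F) (h0 : x 0%N != 0) (h4 : x 4%N != 0) (h2 : (2:F) != 0) :
  wp_act W1 (gpt x) = s_word [:: S3; S4; S5; S4; S3] (gpt x).
Proof. unf; apply: St_eq; field; repeat (apply/andP; split); first [done | exact: oner_neq0]. Qed.

Definition S1pt (F : fieldType) (x : nat -> F) : nat -> F := fun i =>
  nth 0 [:: x 0%N / x 4%N; x 4%N * x 1%N; x 2%N / x 5%N; x 5%N * x 3%N; 1 / x 4%N; 1 / x 5%N;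
            x 6%N; x 7%N; x 8%N; x 10%N; x 9%N] i.

Definition S2pt (F : fieldType) (x : nat -> F) : nat -> F := fun i =>
  let D := x 0%N + x 2%N - 1 in
  let G := x 0%N * x 1%N + x 2%N * x 3%N +
      ((1 - x 9%N - x 10%N) - (x 6%N - x 7%N) - 2 * (x 7%N - x 8%N) - 3 * x 8%N) / 2 in
  nth 0 [:: x 0%N / D; (x 1%N - G) * D; x 2%N / D; (x 3%N - G) * D; x 4%N / (x 4%N - 1); x 5%N / (x 5%N - 1);
            x 9%N; x 7%N; x 8%N; x 6%N; x 10%N] i.

Ltac nzr x H := repeat (first [apply: mulf_neq0 | apply: invr_neq0]); nz1 x H.

Lemma S1gpt (F : fieldType) (x : nat -> F) (H : NZ x) : s_act S1 (gpt x) = gpt (S1pt x).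
Proof. rewrite /S1pt; unf; apply: St_eq; field; side x H. Qed.

Lemma S2gpt (F : fieldType) (x : nat -> F) (H : NZ x) : s_act S2 (gpt x) = gpt (S2pt x).
Proof. rewrite /S2pt; unf; apply: St_eq; field; side x H. Qed.

Lemma LW4 (F : fieldType) (x : nat -> F) (H : NZ x) :
  wp_act W4 (gpt x) = s_word [:: S2; S3; S4; S5; S4; S3; S2] (gpt x).
Proof.
have -> : s_word [:: S2; S3; S4; S5; S4; S3; S2] (gpt x) =
  s_act S2 (s_word [:: S3; S4; S5; S4; S3] (s_act S2 (gpt x))) by [].
have c0 : S2pt x 0%N != 0 by rewrite /S2pt /=; nzr x H.
have c4 : S2pt x 4%N != 0 by rewrite /S2pt /=; nzr x H.
have c2 : (2:F) != 0 by nz1 x H.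
rewrite S2gpt // -(LW1h c0 c4 c2).
rewrite /S2pt; unf; apply: St_eq. all: time field. all: side x H.
Qed.

Ltac hypnz :=
  lazymatch goal with |- is_true (negb (@eq_op _ ?e _)) =>
    first [ done | exact: oner_neq0
          | (have -> : e = 1 by ring); exact: oner_neq0
          | match goal with h : is_true (negb (@eq_op _ ?a _)) |- _ =>
              (have -> : e = a by ring); exact: h end ]
  end.

Lemma S2gph (F : fieldType) (x : nat -> F) (hD : x 0%N + x 2%N - 1 != 0)
  (h4 : x 4%N - 1 != 0) (h5 : x 5%N - 1 != 0) (h2 : (2:F) != 0) :
  s_act S2 (gpt x) = gpt (S2pt x).
Proof. rewrite /S2pt; unf; apply: St_eq; field; repeat (apply/andP; split); try done; hypnz. Qed.

Lemma nz_frac (F : fieldType) (e n d : F) : n != 0 -> d != 0 -> e * d = n -> e != 0.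
Proof. by move=> hn hd he; apply: contraNneq hn => e0; rewrite -he e0 mul0r. Qed.

Lemma LW5 (F : fieldType) (x : nat -> F) (H : NZ x) :
  wp_act W5 (gpt x) = s_word [:: S1; S2; S3; S4; S5; S4; S3; S2; S1] (gpt x).
Proof.
have -> : s_word [:: S1; S2; S3; S4; S5; S4; S3; S2; S1] (gpt x) =
  s_act S1 (s_act S2 (s_word [:: S3; S4; S5; S4; S3] (s_act S2 (s_act S1 (gpt x))))) by [].
have c2 : (2:F) != 0 by nz1 x H.
have h4 : x 4%N != 0 by nz1 x H.
have h5 : x 5%N != 0 by nz1 x H.
have d0 : S1pt x 0%N + S1pt x 2%N - 1 != 0.
  apply: (@nz_frac _ _ (x 0%N * x 5%N + x 2%N * x 4%N - x 4%N * x 5%N) (x 4%N * x 5%N)).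
  - by nz1 x H.
  - by nz1 x H.
  - by rewrite /S1pt /=; field; rewrite h4 h5.
have d4 : S1pt x 4%N - 1 != 0.
  apply: (@nz_frac _ _ (1 - x 4%N) (x 4%N)); [by nz1 x H | done |].
  by rewrite /S1pt /=; field.
have d5 : S1pt x 5%N - 1 != 0.
  apply: (@nz_frac _ _ (1 - x 5%N) (x 5%N)); [by nz1 x H | done |].
  by rewrite /S1pt /=; field.
have c0 : S2pt (S1pt x) 0%N != 0.
  rewrite /S2pt /=; apply: mulf_neq0; last by rewrite invr_eq0.
  by rewrite /S1pt /=; apply: mulf_neq0; [nz1 x H | rewrite invr_eq0].
have c4 : S2pt (S1pt x) 4%N != 0.
  rewrite /S2pt /=; apply: mulf_neq0; last by rewrite invr_eq0.
  by rewrite /S1pt /=; apply: mulf_neq0; [exact: oner_neq0 | rewrite invr_eq0].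
rewrite S1gpt // (S2gph d0 d4 d5 c2) -(LW1h c0 c4 c2).
rewrite /S2pt /S1pt; unf; apply: St_eq. all: time field. all: side x H.
Qed.
Lemma LS0 (F : fieldType) (x : nat -> F) (H : NZ x) : s_act S0 (gpt x) = wp_word [:: P1] (gpt x).
Proof. solveL x H. Qed.
Lemma LS1 (F : fieldType) (x : nat -> F) (H : NZ x) : s_act S1 (gpt x) = wp_word [:: P4] (gpt x).
Proof. solveL x H. Qed.
Lemma LS2 (F : fieldType) (x : nat -> F) (H : NZ x) : s_act S2 (gpt x) = wp_word [:: P5; P2; P6; P5; P2] (gpt x).
Proof. solveL x H. Qed.
Lemma LS3 (F : fieldType) (x : nat -> F) (H : NZ x) : s_act S3 (gpt x) = wp_word [:: P5; P6; P5] (gpt x).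
Proof. solveL x H. Qed.
Lemma LS4 (F : fieldType) (x : nat -> F) (H : NZ x) : s_act S4 (gpt x) = wp_word [:: P6] (gpt x).
Proof. solveL x H. Qed.
Lemma LS5 (F : fieldType) (x : nat -> F) (H : NZ x) : s_act S5 (gpt x) = wp_word [:: W3] (gpt x).
Proof. solveL x H. Qed.
Lemma LW1 (F : fieldType) (x : nat -> F) (H : NZ x) : wp_act W1 (gpt x) = s_word [:: S3; S4; S5; S4; S3] (gpt x).
Proof. solveL x H. Qed.
Lemma LW2 (F : fieldType) (x : nat -> F) (H : NZ x) : wp_act W2 (gpt x) = s_word [:: S4; S5; S4] (gpt x).
Proof. solveL x H. Qed.
Lemma LW3 (F : fieldType) (x : nat -> F) (H : NZ x) : wp_act W3 (gpt x) = s_word [:: S5] (gpt x).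
Proof. solveL x H. Qed.
Lemma LP1 (F : fieldType) (x : nat -> F) (H : NZ x) : wp_act P1 (gpt x) = s_word [:: S0] (gpt x).
Proof. solveL x H. Qed.
Lemma LP2 (F : fieldType) (x : nat -> F) (H : NZ x) : wp_act P2 (gpt x) = s_word [:: S2; S3; S2] (gpt x).
Proof. solveL x H. Qed.
Lemma LP3 (F : fieldType) (x : nat -> F) (H : NZ x) : wp_act P3 (gpt x) = s_word [:: S1; S2; S3; S2; S1] (gpt x).
Proof. solveL x H. Qed.
Lemma LP4 (F : fieldType) (x : nat -> F) (H : NZ x) : wp_act P4 (gpt x) = s_word [:: S1] (gpt x).
Proof. solveL x H. Qed.
Lemma LP5 (F : fieldType) (x : nat -> F) (H : NZ x) : wp_act P5 (gpt x) = s_word [:: S3; S4; S3] (gpt x).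
Proof. solveL x H. Qed.
Lemma LP6 (F : fieldType) (x : nat -> F) (H : NZ x) : wp_act P6 (gpt x) = s_word [:: S4] (gpt x).
Proof. solveL x H. Qed.

Theorem mainTheorem10 :
  (forall g : Sgen, exists l : seq WPgen,
      s_act g generic = wp_word l generic) /\
  (forall g : WPgen, exists l : seq Sgen,
      wp_act g generic = s_word l generic).
Proof.
split; case.
- by exists [:: P1]; exact: (LS0 NZK).
- by exists [:: P4]; exact: (LS1 NZK).
- by exists [:: P5; P2; P6; P5; P2]; exact: (LS2 NZK).
- by exists [:: P5; P6; P5]; exact: (LS3 NZK).
- by exists [:: P6]; exact: (LS4 NZK).
- by exists [:: W3]; exact: (LS5 NZK).
- by exists [:: S3; S4; S5; S4; S3]; exact: (LW1 NZK).
- by exists [:: S4; S5; S4]; exact: (LW2 NZK).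
- by exists [:: S5]; exact: (LW3 NZK).
- by exists [:: S2; S3; S4; S5; S4; S3; S2]; exact: (LW4 NZK).
- by exists [:: S1; S2; S3; S4; S5; S4; S3; S2; S1]; exact: (LW5 NZK).
- by exists [:: S0]; exact: (LP1 NZK).
- by exists [:: S2; S3; S2]; exact: (LP2 NZK).
- by exists [:: S1; S2; S3; S2; S1]; exact: (LP3 NZK).
- by exists [:: S1]; exact: (LP4 NZK).
- by exists [:: S3; S4; S3]; exact: (LP5 NZK).
- by exists [:: S4]; exact: (LP6 NZK).
Qed.
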